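(* For simplices $\sigma,\tau$ on $\gamma_d$, we have $\sigma<_{d+1}\tau$ if and only if $\sigma$ and $\tau$ are $(d+2)$-interlacing in such a way that: when $d$ is even, there is such an interlacing sequence beginning with an element of $\sigma$ but none beginning with an element of $\tau$; when $d$ is odd, there is such an interlacing sequence beginning with an element of $\tau$ but none beginning with an element of $\sigma$.
   Context: $\gamma_d=\{(t,t^2,\dots,t^d):t\in\mathbb{R}\}$; points on it are ordered by parameter. A simplex on $\gamma_d$ is a subset $\sigma\subseteq\gamma_d$ with $|\sigma|\le d+1$, identified with $\mathrm{conv}(\sigma)$. Two simplices overlap in $\mathbb{R}^d$ if $\mathrm{conv}(\sigma)\cap\mathrm{conv}(\tau)\supsetneq\mathrm{conv}(\sigma\cap\tau)$. Subsets $\sigma,\tau$ are $k$-interlacing if there are elements $v_1<\dots<v_k$ of $\sigma\cup\tau$ alternating in membership, either $v_1\in\sigma,v_2\in\tau,v_3\in\sigma,\dots$ (beginning with $\sigma$) or $v_1\in\tau,v_2\in\sigma,\dots$ (beginning with $\tau$). For $\sigma=\{\gamma_d(t_1),\dots,\gamma_d(t_k)\}$ the lifting is $\hat\sigma=\{\gamma_{d+1}(t_i)\}$ and the height function $h_\sigma:\mathrm{conv}(\sigma)\to\mathbb{R}$ gives the last coordinate of the point of $\mathrm{conv}(\hat\sigma)$ projecting to $p$. The relation $\sigma<_{d+1}\tau$ holds iff $\sigma$ and $\tau$ overlap in $\mathbb{R}^d$ and $h_\sigma\le h_\tau$ on $\mathrm{conv}(\sigma)\cap\mathrm{conv}(\tau)$.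 *)

(* Defs.v *)
From HB Require Import structures.
From mathcomp Require Import all_boot all_order all_algebra.
From mathcomp Require Import reals.
Unset Printing Implicit Defensive.
Import Order.TTheory GRing.Theory Num.Theory.
Local Open Scope ring_scope.

Section MomentCurve.
Variable R : realType.

(* A simplex on gamma_d is given by its (distinct) parameters:
   s : seq R with uniq s and size s <= d+1.  The vertex of parameter t is
   gamma_d(t) = (t, t^2, ..., t^d); a point of R^d is a map 'I_d -> R. *)
Definition is_simplex (d : nat) (s : seq R) : Prop :=
  uniq s /\ (size s <= d.+1)%N.

Definition mcurve (d : nat) (t : R) : 'I_d -> R := fun i => t ^+ i.+1.

Definition conv_weights (d : nat) (s : seq R) (l : R -> R) (p : 'I_d -> R) : Prop :=
  (forall t, t \in s -> 0 <= l t) /\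
  \sum_(t <- s) l t = 1 /\
  forall i : 'I_d, p i = \sum_(t <- s) l t * mcurve d t i.

Definition in_conv (d : nat) (s : seq R) (p : 'I_d -> R) : Prop :=
  exists l, conv_weights d s l p.

Definition sinter (s u : seq R) : seq R := [seq t <- s | t \in u].

Definition overlap (d : nat) (s u : seq R) : Prop :=
  (forall p, in_conv d (sinter s u) p -> in_conv d s p /\ in_conv d u p) /\
  (exists p, in_conv d s p /\ in_conv d u p /\ ~ in_conv d (sinter s u) p).

(* h is the last coordinate of a point of conv(hat s) (the lifting of s to
   gamma_{d+1}) whose projection to the first d coordinates is p. *)
Definition is_height (d : nat) (s : seq R) (p : 'I_d -> R) (h : R) : Prop :=
  exists l, conv_weights d s l p /\ h = \sum_(t <- s) l t * t ^+ d.+1.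

Definition below (d : nat) (s u : seq R) : Prop :=
  overlap d s u /\
  forall p hs hu, in_conv d s p -> in_conv d u p ->
    is_height d s p hs -> is_height d u p hu -> hs <= hu.

(* there are v_1 < ... < v_k alternating in membership, v_1 \in A, v_2 \in B,
   v_3 \in A, ...  (a k-interlacing sequence of A, B beginning with A) *)
Definition interlace_from (k : nat) (A B : seq R) : Prop :=
  exists v : seq R, size v = k /\ sorted <%R v /\
    forall j, (j < k)%N -> nth 0 v j \in (if odd j then B else A).

End MomentCurve.

Arguments is_simplex {R}.
Arguments mcurve {R}.
Arguments conv_weights {R}.
Arguments in_conv {R}.
Arguments sinter {R}.
Arguments overlap {R}.
Arguments is_height {R}.
Arguments below {R}.
Arguments interlace_from {R}.

(* Main.v *)
Require Import Defs.
From HB Require Import structures.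
From mathcomp Require Import all_boot all_order all_algebra.
From mathcomp Require Import reals.
Import Order.TTheory GRing.Theory Num.Theory.
Local Open Scope ring_scope.
From mathcomp Require Import all_boot all_order all_algebra.
From mathcomp Require Import reals lra.
From Stdlib Require Import Classical.
Import Order.TTheory GRing.Theory Num.Theory.
Local Open Scope ring_scope.

Section Alt.
Variable R : realFieldType.

Fixpoint altw (S : seq R) (w : R -> R) (e : R) (v : seq R) : Prop :=
  match v with
  | [::] => True
  | x :: v' => x \in S /\ 0 < e * w x /\ all (fun y => y < x) v' /\ altw S w (- e) v'
  end.

Lemma altw_eq S w w' e v : {in v, w =1 w'} -> altw S w e v -> altw S w' e v.
Proof.
elim: v e => [//|x v IH] e Hw /= [xS [sx [al H]]].
split=> //; split; first by rewrite -Hw ?mem_head.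
split=> //; apply: IH=> // y yv; apply: Hw; rewrite in_cons yv orbT //.
Qed.

Lemma altw_sorted S w e v : altw S w e v -> sorted >%R v.
Proof.
elim: v e => [//|x v IH] e /= [_ [_ [al H]]].
rewrite path_sortedE; last by move=> a b c /= h1 h2; apply: lt_trans h2 h1.
rewrite (IH _ H) andbT; apply/allP=> y yv /=; exact: (allP al).
Qed.

Lemma altw_sub S w e v : altw S w e v -> {subset v <= S}.
Proof.
elim: v e => [//|x v IH] e /= [xS [_ [_ H]]] y; rewrite in_cons => /orP [/eqP->//|].
exact: IH H y.
Qed.

Lemma altw_neg S w e v : altw S w (- e) v -> altw S (fun x => - w x) e v.
Proof.
elim: v e => [//|x v IH] e /= [xS [sx [al H]]]; split=> //; split.
  by rewrite mulrN -mulNr.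
by split=> //; exact: IH.
Qed.

Lemma altw_nth S w e v : altw S w e v ->
  forall j, (j < size v)%N -> 0 < e * (-1) ^+ j * w (nth 0 v j).
Proof.
elim: v e => [//|x v IH] e /= [xS [sx [al H]]] [|j] /=; first by rewrite expr0 mulr1.
rewrite ltnS => jv; have := IH _ H j jv.
by rewrite exprS mulrA mulrN1.
Qed.

Lemma ex_lower (S : seq R) : exists L, forall x, x \in S -> L < x.
Proof.
elim: S => [|a S [L HL]]; first by exists 0.
exists (Order.min L (a - 1)) => x; rewrite in_cons => /orP [/eqP->|xS].
  by rewrite gt_min; apply/orP; right; rewrite ltrBlDr ltrDl ltr01.
by rewrite gt_min HL.
Qed.

Lemma ex_upper (S : seq R) : exists L, forall x, x \in S -> x < L.
Proof.
elim: S => [|a S [L HL]]; first by exists 0.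
exists (Order.max L (a + 1)) => x; rewrite in_cons => /orP [/eqP->|xS].
  by rewrite lt_max; apply/orP; right; rewrite ltrDl ltr01.
by rewrite lt_max HL.
Qed.

Lemma ex_gap (S : seq R) b : exists c, b < c /\ forall x, x \in S -> b < x -> c < x.
Proof.
elim: S => [|a S [c [bc Hc]]]; first by exists (b + 1); rewrite ltrDl ltr01.
case: (ltP b a) => ba.
  exists (Order.min c ((b + a) / 2)); split.
    by rewrite lt_min bc /=; lra.
  move=> x; rewrite in_cons => /orP [/eqP->|xS] bx.
    by rewrite gt_min; apply/orP; right; lra.
  by rewrite gt_min Hc.
exists c; split=> // x; rewrite in_cons => /orP [/eqP->|xS] bx.
  by move: (lt_le_trans bx ba); rewrite ltxx.
exact: Hc.
Qed.

Lemma ex_max (s : seq R) : s != [::] -> exists z, z \in s /\ forall x, x \in s -> x <= z.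
Proof.
elim: s => [//|a s IH] _.
case: (altP (s =P [::])) => [->|sn].
  by exists a; split; rewrite ?mem_head // => x; rewrite inE => /eqP->.
case: (IH sn) => z [zs Hz].
exists (Order.max a z); split.
  by case: (leP a z) => _; rewrite in_cons ?eqxx ?zs ?orbT.
move=> x; rewrite in_cons => /orP [/eqP->|xs]; rewrite le_max.
  by rewrite lexx.
by rewrite Hz // orbT.
Qed.

Lemma signe (e x : R) : (e = 1 \/ e = -1) -> x != 0 -> ~ (0 < e * x) -> e * x < 0.
Proof. by move=> [->|->] xn H; rewrite ?mul1r ?mulN1r in H *; rewrite lt_neqAle ?oppr_eq0 ?xn /=;
  move: H; rewrite ?oppr_gt0 => /negP; rewrite -?leNgt ?oppr_le0 ?oppr_ge0 ?lt0r ?xn /=; case: leP. Qed.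

End Alt.
Arguments altw {R}.
Arguments altw_eq {R}.
Arguments altw_sorted {R}.
Arguments altw_sub {R}.
Arguments altw_neg {R}.
Arguments altw_nth {R}.
Arguments ex_lower {R}.
Arguments ex_upper {R}.
Arguments ex_gap {R}.
Arguments ex_max {R}.
Arguments signe {R}.

Section Q.
Variable R : realFieldType.

Lemma polyQ k : forall (S : seq R) w e, (e = 1 \/ e = -1) ->
  ~ (exists v, altw S w e v /\ size v = k.+1) ->
  exists q : {poly R}, q \is monic /\ size q = k.+1 /\
    forall x, x \in S -> w x != 0 -> e * w x * q.[x] < 0.
Proof.
elim: k => [|k IH] S w e he H.
  exists 1; split; first exact: monic1.
  split; first exact: size_poly1.
  move=> x xS wx; rewrite hornerC mulr1; apply: signe => // pos.
  by apply: H; exists [:: x].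
have he' : -e = 1 \/ -e = -1 by case: he => ->; [right|left]; rewrite ?opprK.
have hne : forall x, x \in S -> w x != 0 -> ~ (0 < e * w x) -> e * w x < 0.
  by move=> x _ wx; apply: signe.
have hpe : forall x, x \in S -> w x != 0 -> ~ (e * w x < 0) -> 0 < e * w x.
  move=> x _ wx h; rewrite lt_def mulf_neq0 //=; last by case: he => ->; rewrite ?oppr_eq0 oner_eq0.
  by rewrite leNgt; apply/negP.
have key : forall b, (forall v, altw S (fun x => if b < x then - w x else w x) (-e) v ->
      size v = k.+1 -> False) ->
    exists q : {poly R}, q \is monic /\ size q = k.+2 /\
    forall x, x \in S -> w x != 0 -> e * w x * q.[x] < 0.
  move=> b Hb; have [c [bc Hc]] := ex_gap S b.
  have [q' [mq [sq Hq]]] := IH S (fun x => if b < x then - w x else w x) (-e) he'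
    (fun h => let: ex_intro v (conj h1 h2) := h in Hb v h1 h2).
  exists (q' * ('X - c%:P)); split; first by rewrite monicMl // monicXsubC.
  split; first by rewrite size_Mmonic ?monic_neq0 ?monicXsubC // sq size_XsubC addn2.
  move=> x xS wx; rewrite hornerM hornerXsubC mulrA.
  have := Hq x xS; case: (ltP b x) => bx.
    rewrite oppr_eq0 => /(_ wx); rewrite mulrNN => h.
    have xc : 0 < x - c by rewrite subr_gt0 Hc.
    by rewrite (pmulr_llt0 _ xc).
  move=> /(_ wx); rewrite mulNr mulNr oppr_lt0 => h.
  have xc : x - c < 0 by rewrite subr_lt0; apply: le_lt_trans bc.
  by rewrite (nmulr_llt0 _ xc).
set N := [seq x <- S | 0 < e * w x].
set P := [seq x <- S | e * w x < 0].
case: (altP (N =P [::])) => HN.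
  have [L HL] := ex_lower S.
  exists (('X - L%:P) ^+ k.+1); split; first by rewrite monic_exp // monicXsubC.
  split; first by rewrite size_exp_XsubC.
  move=> x xS wx; rewrite horner_exp hornerXsubC.
  have h1 : e * w x < 0.
    apply: hne => // pos; have : x \in N by rewrite mem_filter pos xS.
    by rewrite HN.
  have h2 : 0 < (x - L) ^+ k.+1 by rewrite exprn_gt0 // subr_gt0 HL.
  by rewrite (pmulr_llt0 _ h2).
case: (altP (P =P [::])) => HP.
  have [L HL] := ex_lower S; have [c Hc] := ex_upper S.
  exists (('X - L%:P) ^+ k * ('X - c%:P)); split.
    by rewrite monicMl ?monicXsubC // monic_exp // monicXsubC.
  split.
    by rewrite size_Mmonic ?monic_neq0 ?monicXsubC ?monic_exp ?monicXsubC // size_exp_XsubC size_XsubC addn2.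
  move=> x xS wx; rewrite hornerM horner_exp !hornerXsubC mulrA.
  have h1 : 0 < e * w x.
    apply: hpe => // neg; have : x \in P by rewrite mem_filter neg xS.
    by rewrite HP.
  have h2 : 0 < (x - L) ^+ k by rewrite exprn_gt0 // subr_gt0 HL.
  have h3 : x - c < 0 by rewrite subr_lt0 Hc.
  by rewrite (nmulr_llt0 _ h3) (pmulr_lgt0 _ h2).
have [z [zP Hz]] := ex_max _ HP.
have [y [yN Hy]] := ex_max _ HN.
move: (zP) (yN); rewrite !mem_filter => /andP [ez zS] /andP [ey yS].
have altW : forall b v, all (fun t => t <= b) v ->
    altw S (fun x => if b < x then - w x else w x) (-e) v -> altw S w (-e) v.
  move=> b v /allP hv; apply: altw_eq => t tv /=.
  by rewrite ltNge hv.
case: (ltP z y) => zy.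
  apply: (key z) => -[//|x v] /= [xS [sx [al Hv]]] sv.
  case: (ltP z x) => zx.
    move: sx; rewrite zx mulrNN => sx.
    case: v al Hv sv => [|x' v] /= al Hv sv.
      apply: H; exists [:: x; z]; split; last by case: sv => <-.
      rewrite /= zx; split=> //; split=> //; split=> //; split=> //.
      by split; [rewrite mulNr oppr_gt0|].
    case: Hv => [x'S [sx' [al' Hv]]].
    rewrite opprK in sx'.
    have x'z : x' <= z.
      rewrite leNgt; apply/negP => zx'; move: sx'; rewrite zx' mulrN oppr_gt0 => h.
      have : x' \in P by rewrite mem_filter h x'S.
      by move/Hz; rewrite leNgt zx'.
    move: sx'; rewrite (ltNge z x') x'z /= => sx'.
    have x'z' : x' < z.
      rewrite lt_neqAle x'z andbT; apply/negP => /eqP e'; rewrite e' in sx'.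
      by move: (lt_trans ez sx'); rewrite ltxx.
    have Hv' : altw S w (- e) v.
      rewrite opprK in Hv; apply: (altW z) => //; apply/allP => t tv.
      by apply: ltW; apply: lt_le_trans x'z; exact: (allP al').
    apply: H; exists [:: x, z, x' & v]; split; last by rewrite /= sv.
    move: al => /andP [x'x al]; rewrite /=.
    split=> //; split=> //; split.
      by rewrite zx x'x al.
    split=> //; split; first by rewrite mulNr oppr_gt0.
    split; first by rewrite x'z' /=; apply/allP => t tv; apply: lt_trans x'z'; exact: (allP al').
    by rewrite opprK.
  have Hv' : altw S w (-e) (x :: v).
    apply: (altW z); first by rewrite /= zx; apply/allP => t tv; apply: ltW; apply: lt_le_trans zx; exact: (allP al).
    by rewrite /= ; split=> //; split=> //; split.
  apply: H; exists (y :: x :: v); split; last by rewrite /= sv.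
  split=> //; split=> //; split=> //.
  have xy : x < y by apply: le_lt_trans zy.
  by rewrite /= xy; apply/allP => t tv; apply: lt_trans xy; exact: (allP al).
apply: (key y) => -[//|x v] /= [xS [sx [al Hv]]] sv.
have xy : x <= y.
  rewrite leNgt; apply/negP => yx; move: sx; rewrite yx mulrNN => h.
  have : x \in N by rewrite mem_filter h xS.
  by move/Hy; rewrite leNgt yx.
have Hv' : altw S w (-e) (x :: v).
  apply: (altW y); first by rewrite /= xy; apply/allP => t tv; apply: ltW; apply: lt_le_trans xy; exact: (allP al).
  by rewrite /= ; split=> //; split=> //; split.
have xy' : x < y.
  rewrite lt_neqAle xy andbT; apply/negP => /eqP e'.
  move: Hv' => /= [_ [h _]]; rewrite e' mulNr oppr_gt0 in h.
  by move: (lt_trans h ey); rewrite ltxx.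
apply: H; exists (y :: x :: v); split; last by rewrite /= sv.
split=> //; split=> //; split=> //.
by rewrite /= xy'; apply/allP => t tv; apply: lt_trans xy'; exact: (allP al).
Qed.

End Q.
Arguments polyQ {R}.
Section C.
Variable R : realFieldType.

Definition ann (S : seq R) (w : R -> R) (d : nat) :=
  forall i, (i <= d)%N -> \sum_(x <- S) w x * x ^+ i = 0.

Lemma ann_sum S w d (c : nat -> R) : ann S w d ->
  \sum_(x <- S) w x * \sum_(i < d.+1) c i * x ^+ i = 0.
Proof.
move=> H.
transitivity (\sum_(i < d.+1) c i * \sum_(x <- S) w x * x ^+ i).
  under eq_bigr do rewrite mulr_sumr.
  rewrite exchange_big /=; apply: eq_bigr => i _; rewrite mulr_sumr.
  by apply: eq_bigr => x _; rewrite mulrCA.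
by apply: big1 => i _; rewrite H ?mulr0 // -ltnS.
Qed.

Lemma altw_uniq (S : seq R) (w : R -> R) e v : altw S w e v -> uniq v.
Proof.
move/altw_sorted; apply: sorted_uniq.
  by move=> a b c /= h1 h2; apply: lt_trans h2 h1.
by move=> a /=; rewrite ltxx.
Qed.

Lemma sum_neg (S : seq R) (f : R -> R) x0 : x0 \in S -> f x0 < 0 ->
  (forall x, x \in S -> f x <= 0) -> \sum_(x <- S) f x < 0.
Proof.
elim: S => [//|a S IH] x0S f0 Hf; rewrite big_cons.
have ha : f a <= 0 by apply: Hf; rewrite mem_head.
have hS : forall x, x \in S -> f x <= 0 by move=> x xS; apply: Hf; rewrite in_cons xS orbT.
move: x0S; rewrite in_cons => /orP [/eqP e0|x0S].
  have : \sum_(x <- S) f x <= 0 by rewrite big_seq_cond; apply: sumr_le0 => x /andP [xS _]; apply: hS.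
  rewrite -e0; move: f0; lra.
have := IH x0S f0 hS; move: ha; lra.
Qed.

Lemma corC (S : seq R) (w : R -> R) d e : (e = 1 \/ e = -1) -> ann S w d ->
  (exists x, x \in S /\ w x != 0) ->
  ~ (exists v, altw S w e v /\ size v = d.+2) ->
  e * \sum_(x <- S) w x * x ^+ d.+1 < 0.
Proof.
move=> he H [x0 [x0S wx0]] Hn.
have [q [mq [sq Hq]]] := polyQ (d.+1) S w e he Hn.
have eq1 : \sum_(x <- S) w x * q.[x] = \sum_(x <- S) w x * x ^+ d.+1.
  transitivity (\sum_(x <- S) (w x * x ^+ d.+1 + w x * \sum_(i < d.+1) q`_i * x ^+ i)).
    apply: eq_bigr => x _; rewrite -mulrDr horner_coef sq big_ord_recr /= addrC.
    congr (_ * (_ + _)).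
    by move/monicP: mq; rewrite /lead_coef sq /= => ->; rewrite mul1r.
  by rewrite big_split /= ann_sum // addr0.
rewrite -eq1 mulr_sumr.
apply: (sum_neg _ _ x0) => //.
  by rewrite mulrA; apply: Hq.
move=> x xS; case: (altP (w x =P 0)) => [->|wx]; first by rewrite mul0r mulr0.
by rewrite mulrA; apply: ltW; apply: Hq.
Qed.

Lemma vand (S : seq R) (w : R -> R) d : uniq S -> (size S <= d.+1)%N -> ann S w d ->
  forall x, x \in S -> w x = 0.
Proof.
move=> uS sS H x xS; apply/eqP; apply/negP => /negP wx.
have no : forall e, ~ (exists v, altw S w e v /\ size v = d.+2).
  move=> e [v [hv sv]].
  have := uniq_leq_size (altw_uniq _ _ _ _ hv) (altw_sub _ _ _ _ hv).
  by rewrite sv => h; move: (leq_trans h sS); rewrite ltnn.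
have h1 := corC S w d 1 (or_introl erefl) H (ex_intro _ x (conj xS wx)) (no 1).
have h2 := corC S w d (-1) (or_intror erefl) H (ex_intro _ x (conj xS wx)) (no (-1)).
move: h1 h2; rewrite mul1r mulN1r; lra.
Qed.

Lemma ex_alt (S : seq R) (w : R -> R) d : ann S w d -> (exists x, x \in S /\ w x != 0) ->
  exists e, (e = 1 \/ e = -1) /\ exists v, altw S w e v /\ size v = d.+2.
Proof.
move=> H Hx.
case: (classic (exists v, altw S w 1 v /\ size v = d.+2)) => h1.
  by exists 1; split; [left|].
case: (classic (exists v, altw S w (-1) v /\ size v = d.+2)) => h2.
  by exists (-1); split; [right|].
have := corC S w d 1 (or_introl erefl) H Hx h1; have := corC S w d (-1) (or_intror erefl) H Hx h2.
rewrite mul1r mulN1r; lra.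
Qed.

End C.
Arguments ann {R}.
Arguments ann_sum {R}.
Arguments altw_uniq {R}.
Arguments sum_neg {R}.
Arguments corC {R}.
Arguments vand {R}.
Arguments ex_alt {R}.
Section K.
Variable R : realFieldType.

Lemma kernel (u : seq R) d : size u = d.+2 -> uniq u ->
  exists w, ann u w d /\ exists x, x \in u /\ w x != 0.
Proof.
move=> su uu.
pose A : 'M[R]_(d.+2, d.+1) := \matrix_(j, i) (nth 0 u j) ^+ i.
pose K := kermx A.
have K0 : K != 0.
  rewrite -mxrank_eq0 mxrank_ker subn_eq0 -ltnNge ltnS; exact: rank_leq_col.
have [i [j Kij]] := matrix0Pn _ K0.
pose w x := K i (inord (index x u)).
have wn : forall j' : 'I_d.+2, w (nth 0 u j') = K i j'.
  by move=> j'; rewrite /w index_uniq ?su // inord_val.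
exists w; split.
  move=> k kd.
  rewrite (big_nth 0) su big_mkord.
  under eq_bigr do rewrite wn.
  have h : (K *m A) i (inord k) = 0 by rewrite mulmx_ker mxE.
  transitivity ((K *m A) i (inord k)); last exact: h.
  rewrite [RHS]mxE.
  apply: eq_bigr => j0 _; rewrite [A _ _]mxE inordK // ltnS.
by exists (nth 0 u j); split; [rewrite mem_nth // su | rewrite wn].
Qed.

End K.
Arguments kernel {R}.
Section Aux.
Variable R : realFieldType.

Lemma sum_supp (s1 s2 : seq R) (f : R -> R) : uniq s1 -> uniq s2 ->
  (forall x, x \in s1 -> x \notin s2 -> f x = 0) ->
  (forall x, x \in s2 -> x \notin s1 -> f x = 0) ->
  \sum_(x <- s1) f x = \sum_(x <- s2) f x.
Proof.
move=> u1 u2 h1 h2.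
have e1 : \sum_(x <- s1) f x = \sum_(x <- s1 | x \in s2) f x.
  rewrite [RHS]big_mkcond; apply: eq_big_seq => x xs1 /=.
  by case: ifP => // /negbT h; rewrite h1.
have e2 : \sum_(x <- s2) f x = \sum_(x <- s2 | x \in s1) f x.
  rewrite [RHS]big_mkcond; apply: eq_big_seq => x xs2 /=.
  by case: ifP => // /negbT h; rewrite h2.
rewrite e1 e2 -(big_filter s1) -(big_filter s2); apply: perm_big; apply: uniq_perm; rewrite ?filter_uniq //.
by move=> x; rewrite !mem_filter andbC.
Qed.

Lemma lift_sum (s S : seq R) (a g : R -> R) : uniq s -> uniq S -> {subset s <= S} ->
  \sum_(x <- S) (if x \in s then a x else 0) * g x = \sum_(x <- s) a x * g x.
Proof.
move=> us uS sub.
rewrite (sum_supp _ s) //.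
- by apply: eq_big_seq => x xs; rewrite xs.
- by move=> x _ h; rewrite (negbTE h) mul0r.
- by move=> x xs h; move: (sub x xs); rewrite (negbTE h).
Qed.

Lemma sum_inter (s t : seq R) (f : R -> R) : uniq s -> uniq t ->
  \sum_(x <- t) (if x \in s then f x else 0) = \sum_(x <- [seq y <- s | y \in t]) f x.
Proof.
move=> us ut; rewrite -big_mkcond -big_filter.
apply: perm_big; apply: uniq_perm; rewrite ?filter_uniq //.
by move=> x; rewrite !mem_filter andbC.
Qed.

Lemma sum_inter' (s t : seq R) (f : R -> R) :
  \sum_(x <- s) (if x \in t then f x else 0) = \sum_(x <- [seq y <- s | y \in t]) f x.
Proof. by rewrite -big_mkcond -big_filter. Qed.

Lemma ann_diff (S : seq R) (a b : R -> R) d (p : 'I_d -> R) :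
  \sum_(x <- S) a x = 1 -> \sum_(x <- S) b x = 1 ->
  (forall i : 'I_d, p i = \sum_(x <- S) a x * x ^+ i.+1) ->
  (forall i : 'I_d, p i = \sum_(x <- S) b x * x ^+ i.+1) ->
  ann S (fun x => a x - b x) d.
Proof.
move=> sa sb pa pb [|i] id.
  under eq_bigr do rewrite expr0 mulr1.
  by rewrite sumrB sa sb subrr.
under eq_bigr do rewrite mulrBl.
by rewrite sumrB -(pa (Ordinal id)) -(pb (Ordinal id)) subrr.
Qed.

Lemma altw_full (u : seq R) w e v : sorted <%R u -> altw u w e v -> size v = size u -> v = rev u.
Proof.
move=> su hv sv.
have uv := altw_uniq _ _ _ _ hv.
have [_ eqm] := uniq_min_size uv (altw_sub _ _ _ _ hv) (eq_leq (esym sv)).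
rewrite -(revK v); congr rev.
have hs : sorted <%R (rev v) by rewrite rev_sorted; apply: altw_sorted hv.
apply: (irr_sorted_eq (leT := <%R)) hs su _.
- by move=> a b c; apply: lt_trans.
- by move=> a; rewrite ltxx.
- by move=> x; rewrite mem_rev eqm.
Qed.

Lemma alt_kernel (u : seq R) d : size u = d.+2 -> sorted <%R u ->
  exists w, ann u w d /\ forall j, (j < d.+2)%N -> 0 < (-1) ^+ (d.+1 - j) * w (nth 0 u j).
Proof.
move=> su so.
have uu : uniq u.
  apply: (sorted_uniq (leT := <%R)) so.
    by move=> a b c; apply: lt_trans.
  by move=> a; rewrite ltxx.
have [w0 [an nz]] := kernel u d su uu.
have [e [he [v [hv sv]]]] := ex_alt u w0 d an nz.
have vu : v = rev u by apply: (altw_full _ _ _ _ so hv); rewrite sv su.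
exists (fun x => e * w0 x); split.
  move=> i id; under eq_bigr do rewrite -mulrA; by rewrite -mulr_sumr an // mulr0.
move=> j jd.
have jv : (d.+1 - j < size v)%N by rewrite sv; apply: leq_ltn_trans (leq_subr _ _) _.
have := altw_nth _ _ _ _ hv _ jv.
rewrite vu nth_rev; last by rewrite su -sv.
have -> : (size u - (d.+1 - j).+1 = j)%N.
  by rewrite su subSS subKn // -ltnS.
by rewrite mulrCA mulrA.
Qed.

End Aux.
Arguments sum_supp {R}.
Arguments lift_sum {R}.
Arguments sum_inter {R}.
Arguments sum_inter' {R}.
Arguments ann_diff {R}.
Arguments altw_full {R}.
Arguments alt_kernel {R}.

Section Aux2.
Variable R : realType.

Definition End_ (n : nat) (A B : seq R) :=
  if odd n then interlace_from n A B else interlace_from n B A.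

Lemma end_char n (A B : seq R) : (0 < n)%N ->
  End_ n A B <-> exists u, size u = n /\ sorted <%R u /\
     forall j, (j < n)%N -> nth 0 u j \in (if odd (n - j.+1) then B else A).
Proof.
move=> n0.
have par : forall j, (j < n)%N -> odd (n - j.+1) = odd n (+) ~~ odd j.
  by move=> j jn; rewrite oddB //.
rewrite /End_; case: ifP => on; split; move=> [u [su [so hu]]]; exists u; do 2!split=> //.
- by move=> j jn; rewrite par // on /= negbK; apply: hu.
- by move=> j jn; have := hu j jn; rewrite par // on /= negbK.
- by move=> j jn; rewrite par // on /=; have := hu j jn; case: (odd j).
- by move=> j jn; have := hu j jn; rewrite par // on /=; case: (odd j).
Qed.

Lemma end_of_alt (S : seq R) w v n (A B : seq R) : altw S w 1 v -> size v = n -> (0 < n)%N ->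
  (forall x, x \in S -> 0 < w x -> x \in A) -> (forall x, x \in S -> w x < 0 -> x \in B) ->
  End_ n A B.
Proof.
move=> hv sv n0 hA hB; apply/end_char => //.
exists (rev v); split; first by rewrite size_rev.
split; first by rewrite rev_sorted; apply: altw_sorted hv.
move=> j jn; rewrite nth_rev ?sv //.
have jv : (n - j.+1 < size v)%N by rewrite sv; case: n jn {sv n0} => // n jn; rewrite subSS ltnS leq_subr.
have := altw_nth _ _ _ _ hv _ jv; rewrite mul1r.
have xS : nth 0 v (n - j.+1) \in S by apply: (altw_sub _ _ _ _ hv); rewrite mem_nth.
rewrite -signr_odd; case: (odd (n - j.+1)) => /=; rewrite ?expr1 ?expr0 ?mulN1r ?mul1r ?oppr_gt0 => h.
  by apply: hB.
by apply: hA.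
Qed.

End Aux2.
Arguments End_ {R}.
Arguments end_char {R}.
Arguments end_of_alt {R}.
Section Main.
Variable R : realType.

Lemma ifmul (b : bool) (a c : R) : (if b then a else 0) * c = if b then a * c else 0.
Proof. by case: b; rewrite ?mul0r. Qed.

Definition comb (s t : seq R) (la mu : R -> R) (x : R) :=
  (if x \in s then la x else 0) - (if x \in t then mu x else 0).

Lemma combine d (s t : seq R) la mu p : uniq s -> uniq t ->
  conv_weights d s la p -> conv_weights d t mu p ->
  ann (undup (s ++ t)) (comb s t la mu) d /\
  (forall g, \sum_(x <- undup (s ++ t)) comb s t la mu x * g x =
     \sum_(x <- s) la x * g x - \sum_(x <- t) mu x * g x) /\
  (forall x, 0 < comb s t la mu x -> x \in s) /\
  (forall x, comb s t la mu x < 0 -> x \in t).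
Proof.
move=> us ut [la0 [la1 lap]] [mu0 [mu1 mup]].
set S := undup (s ++ t).
have uS : uniq S := undup_uniq _.
have subs : {subset s <= S} by move=> x xs; rewrite mem_undup mem_cat xs.
have subt : {subset t <= S} by move=> x xs; rewrite mem_undup mem_cat xs orbT.
have hg : forall g, \sum_(x <- S) comb s t la mu x * g x =
     \sum_(x <- s) la x * g x - \sum_(x <- t) mu x * g x.
  by move=> g; rewrite /comb; under eq_bigr do rewrite mulrBl; rewrite sumrB !lift_sum.
split.
  apply: (ann_diff S _ _ d p).
  - transitivity (\sum_(x <- S) (if x \in s then la x else 0) * 1).
      by apply: eq_bigr => x _; rewrite mulr1.
    by rewrite lift_sum //; under eq_bigr do rewrite mulr1.
  - transitivity (\sum_(x <- S) (if x \in t then mu x else 0) * 1).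
      by apply: eq_bigr => x _; rewrite mulr1.
    by rewrite lift_sum //; under eq_bigr do rewrite mulr1.
  - by move=> i; rewrite lift_sum // lap.
  - by move=> i; rewrite lift_sum // mup.
split=> //; split.
  move=> x; rewrite /comb; case: ifP => // _; rewrite sub0r oppr_gt0.
  by case: ifP => [xt|]; [rewrite ltNge mu0|rewrite ltxx].
move=> x; rewrite /comb; case: (boolP (x \in t)) => // _; rewrite subr0.
by case: ifP => [xs|]; [rewrite ltNge la0|rewrite ltxx].
Qed.

Lemma gadget (A B : seq R) d : uniq A -> uniq B -> End_ d.+2 A B ->
  exists (la mu : R -> R) (p : 'I_d -> R) (x : R),
    conv_weights d A la p /\ conv_weights d B mu p /\
    \sum_(t <- B) mu t * t ^+ d.+1 < \sum_(t <- A) la t * t ^+ d.+1 /\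
    x \in A /\ 0 < la x /\ mu x = 0.
Proof.
move=> uA uB /end_char [] // u [su [so hu]].
have [w [an sg]] := alt_kernel u d su so.
have uu : uniq u.
  apply: (sorted_uniq (leT := <%R)) so.
    by move=> a b c; apply: lt_trans.
  by move=> a; rewrite ltxx.
have memAB : forall x, x \in u -> (0 < w x -> x \in A) /\ (w x < 0 -> x \in B).
  move=> x xu; have ji : (index x u < d.+2)%N by rewrite -su index_mem.
  have := hu _ ji; have := sg _ ji; rewrite (nth_index 0 xu) subSS.
  rewrite -signr_odd; case: odd => /=; rewrite ?expr1 ?expr0 ?mulN1r ?mul1r ?oppr_gt0 => h1 h2.
    by split=> // h; move: (lt_trans h1 h); rewrite ltxx.
  by split=> // h; move: (lt_trans h1 h); rewrite ltxx.
pose xs := nth 0 u d.+1.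
have xsu : xs \in u by rewrite mem_nth // su.
have wxs : 0 < w xs by have := sg d.+1 (ltnSn _); rewrite subnn expr0 mul1r.
pose T := \sum_(x <- u) (if 0 < w x then w x else 0).
have T0 : 0 < T.
  have h := sum_neg u (fun x => - (if 0 < w x then w x else 0)) xs xsu.
  have : \sum_(x <- u) - (if 0 < w x then w x else 0) < 0.
    apply: h; first by rewrite wxs oppr_lt0.
    by move=> x _; rewrite oppr_le0; case: ifP => // /ltW.
  by rewrite sumrN oppr_lt0.
have Tn : T != 0 by rewrite gt_eqF.
pose la x := if (x \in u) && (0 < w x) then w x / T else 0.
pose mu x := if (x \in u) && (w x < 0) then - w x / T else 0.
have la0 : forall x, 0 <= la x.
  move=> x; rewrite /la; case: ifP => // /andP [_ h].
  by rewrite divr_ge0 // ltW.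
have mu0 : forall x, 0 <= mu x.
  move=> x; rewrite /mu; case: ifP => // /andP [_ h].
  by rewrite divr_ge0 // ltW // oppr_gt0.
have suppA : forall F : R -> R, (forall x, la x = 0 -> F x = 0) ->
    \sum_(x <- A) F x = \sum_(x <- u) F x.
  move=> F hF; apply: sum_supp => // x.
    by move=> _ xu; apply: hF; rewrite /la (negbTE xu).
  move=> xu xA; apply: hF; rewrite /la xu /=; case: ifP => // h.
  by move: xA; rewrite (proj1 (memAB x xu) h).
have suppB : forall F : R -> R, (forall x, mu x = 0 -> F x = 0) ->
    \sum_(x <- B) F x = \sum_(x <- u) F x.
  move=> F hF; apply: sum_supp => // x.
    by move=> _ xu; apply: hF; rewrite /mu (negbTE xu).
  move=> xu xB; apply: hF; rewrite /mu xu /=; case: ifP => // h.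
  by move: xB; rewrite (proj2 (memAB x xu) h).
have diff : forall x, x \in u -> la x - mu x = w x / T.
  move=> x xu; rewrite /la /mu xu /=.
  case: (ltgtP 0 (w x)) => h.
  - by rewrite subr0.
  - by rewrite sub0r mulNr opprK.
  - by rewrite -h mul0r subr0.
have sw : forall g : R -> R, \sum_(x <- u) la x * g x - \sum_(x <- u) mu x * g x =
    (\sum_(x <- u) w x * g x) / T.
  move=> g; rewrite -sumrB mulr_suml; apply: eq_big_seq => x xu.
  by rewrite -mulrBl diff // mulrAC.
have sla : \sum_(x <- u) la x = 1.
  transitivity (\sum_(x <- u) (if 0 < w x then w x else 0) / T); last by rewrite -mulr_suml divff.
  by apply: eq_big_seq => x xu; rewrite /la xu /=; case: ifP => //; rewrite mul0r.
have smu : \sum_(x <- u) mu x = 1.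
  have := sw (fun x => x ^+ 0); rewrite an // mul0r.
  under eq_bigr do rewrite expr0 mulr1.
  under [X in _ - X]eq_bigr do rewrite expr0 mulr1.
  by rewrite sla => /eqP; rewrite subr_eq0 => /eqP <-.
pose p := fun i : 'I_d => \sum_(t <- A) la t * t ^+ i.+1.
have hA : forall g : R -> R, \sum_(t <- A) la t * g t = \sum_(t <- u) la t * g t.
  by move=> g; apply: suppA => x ->; rewrite mul0r.
have hB : forall g : R -> R, \sum_(t <- B) mu t * g t = \sum_(t <- u) mu t * g t.
  by move=> g; apply: suppB => x ->; rewrite mul0r.
exists la, mu, p, xs; split.
  split=> //; split; last by move=> i.
  by rewrite (suppA la) // => x ->.
split.
  split=> //; split.
    by rewrite (suppB mu) // => x ->.
  move=> i; rewrite /p /mcurve hA (hB (fun t => t ^+ i.+1)).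
  apply/eqP; rewrite -subr_eq0; apply/eqP.
  by rewrite (sw (fun t => t ^+ i.+1)) an ?mul0r.
split.
  rewrite -subr_gt0 hA hB sw divr_gt0 //.
  have nz : exists x, x \in u /\ w x != 0 by exists xs; split=> //; rewrite gt_eqF.
  have no : ~ exists v, altw u w (-1) v /\ size v = d.+2.
    move=> [v [hv sv]].
    have vu : v = rev u by apply: (altw_full _ _ _ _ so hv); rewrite sv su.
    have := altw_nth _ _ _ _ hv 0; rewrite sv => /(_ isT).
    rewrite vu nth_rev ?su // subn1 /= expr0 mulr1 mulN1r oppr_gt0 => h.
    by move: (lt_trans h wxs); rewrite ltxx.
  have := corC u w d (-1) (or_intror erefl) an nz no.
  by rewrite mulN1r oppr_lt0.
split; first by have := proj1 (memAB xs xsu) wxs.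
split; first by rewrite /la xsu wxs /= divr_gt0.
by rewrite /mu xsu /= ltNge (ltW wxs).
Qed.

End Main.
Arguments comb {R}.
Arguments combine {R}.
Arguments gadget {R}.
Arguments ifmul {R}.

Theorem proposition2p4 (R : realType) (d : nat) (sigma tau : seq R) :
  is_simplex d sigma -> is_simplex d tau ->
  (below d sigma tau <->
   ((~~ odd d -> interlace_from d.+2 sigma tau /\ ~ interlace_from d.+2 tau sigma) /\
    (odd d -> interlace_from d.+2 tau sigma /\ ~ interlace_from d.+2 sigma tau))).
Proof.
move=> [uS sS] [uT sT].
have key : ((~~ odd d -> interlace_from d.+2 sigma tau /\ ~ interlace_from d.+2 tau sigma) /\
    (odd d -> interlace_from d.+2 tau sigma /\ ~ interlace_from d.+2 sigma tau)) <->
    (End_ d.+2 tau sigma /\ ~ End_ d.+2 sigma tau).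
  rewrite /End_ /= negbK; case: (odd d) => /=; split.
  - by move=> [_ h]; apply: h.
  - by move=> h; split.
  - by move=> [h _]; apply: h.
  - by move=> h; split.
rewrite key; clear key.
split.
  move=> [[ov1 [p [[la hla] [[mu hmu] nic]]]] hb].
  have notS : ~ End_ d.+2 sigma tau.
    move=> hE; have [la' [mu' [p' [x [c1 [c2 [hh _]]]]]]] := gadget sigma tau d uS uT hE.
    have := hb p' _ _ (ex_intro _ la' c1) (ex_intro _ mu' c2)
      (ex_intro _ la' (conj c1 erefl)) (ex_intro _ mu' (conj c2 erefl)).
    by rewrite leNgt hh.
  split=> //.
  have [an [hg [hpos hneg]]] := combine d sigma tau la mu p uS uT hla hmu.
  have nz : exists x, x \in undup (sigma ++ tau) /\ comb sigma tau la mu x != 0.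
    apply: NNPP => hn; apply: nic; exists la.
    have z : forall x, x \in sigma -> x \notin tau -> la x = 0.
      move=> x xs xt; case: (altP (comb sigma tau la mu x =P 0)) => h.
        by move: h; rewrite /comb xs (negbTE xt) subr0.
      by exfalso; apply: hn; exists x; split=> //; rewrite mem_undup mem_cat xs.
    case: hla => [la0 [la1 lap]].
    split; first by move=> x; rewrite mem_filter => /andP [_ xs]; apply: la0.
    split.
      rewrite -la1 /sinter big_filter [LHS]big_mkcond; apply: eq_big_seq => x xs /=.
      by case: ifP => // /negbT xt; rewrite z.
    move=> i; rewrite lap /sinter big_filter [RHS]big_mkcond; apply: eq_big_seq => x xs /=.
    by case: ifP => // /negbT xt; rewrite z // mul0r.
  have [e [he [v [hv sv]]]] := ex_alt _ _ d an nz.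
  case: he => ?; subst e.
    exfalso; apply: notS; apply: (end_of_alt _ _ v _ _ _ hv sv) => // x _.
      exact: hpos.
    exact: hneg.
  have hv' := altw_neg _ _ 1 v hv.
  apply: (end_of_alt _ _ v _ _ _ hv' sv) => // x _ h.
    by apply: hneg; rewrite -oppr_gt0.
  by apply: hpos; rewrite -oppr_lt0.
move=> [hT nS].
split; first split.
- move=> p [k [k0 [k1 kp]]]; split.
    exists (fun x => if x \in tau then k x else 0); split.
      move=> x xs; case: ifP => xt //; apply: k0; by rewrite mem_filter xt xs.
    split; first by rewrite sum_inter'.
    by move=> i; rewrite kp; under [RHS]eq_bigr do rewrite /= ifmul; exact: (esym (sum_inter' sigma tau (fun x => k x * mcurve d x i))).
  exists (fun x => if x \in sigma then k x else 0); split.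
    move=> x xt; case: ifP => xs //; apply: k0; by rewrite mem_filter xt xs.
  split; first by rewrite sum_inter.
  by move=> i; rewrite kp; under [RHS]eq_bigr do rewrite /= ifmul; exact: (esym (sum_inter sigma tau (fun x => k x * mcurve d x i) uS uT)).
- have [la' [mu' [p [x [[la0 [la1 lap]] [[mu0 [mu1 mup]] [_ [xt [lax mux]]]]]]]]] :=
    gadget tau sigma d uT uS hT.
  exists p; split; first by exists mu'.
  split; first by exists la'.
  move=> [k [k0 [k1 kp]]].
  have eqs : forall y, y \in sigma -> mu' y - (if y \in tau then k y else 0) = 0.
    apply: (vand sigma _ d uS sS); apply: (ann_diff sigma _ _ d p) => //.
    - by rewrite sum_inter'.
    - by move=> i; rewrite kp; under [RHS]eq_bigr do rewrite /= ifmul; exact: (esym (sum_inter' sigma tau (fun x => k x * x ^+ i.+1))).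
  have eqt : forall y, y \in tau -> la' y - (if y \in sigma then k y else 0) = 0.
    apply: (vand tau _ d uT sT); apply: (ann_diff tau _ _ d p) => //.
    - by rewrite sum_inter.
    - by move=> i; rewrite kp; under [RHS]eq_bigr do rewrite /= ifmul; exact: (esym (sum_inter sigma tau (fun x => k x * x ^+ i.+1) uS uT)).
  have := eqt x xt; case: (boolP (x \in sigma)) => xs.
    have := eqs x xs; rewrite xt mux sub0r => /eqP; rewrite oppr_eq0 => /eqP ->.
    by rewrite subr0 => h; move: lax; rewrite h ltxx.
  by rewrite subr0 => h; move: lax; rewrite h ltxx.
- move=> p hs hu _ _ [la [hla ->]] [mu [hmu ->]].
  have [an [hg [hpos hneg]]] := combine d sigma tau la mu p uS uT hla hmu.
  rewrite -subr_le0 -(hg (fun x => x ^+ d.+1)).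
  case: (classic (exists x, x \in undup (sigma ++ tau) /\ comb sigma tau la mu x != 0)) => nz.
    have no : ~ exists v, altw (undup (sigma ++ tau)) (comb sigma tau la mu) 1 v /\ size v = d.+2.
      move=> [v [hv sv]]; apply: nS; apply: (end_of_alt _ _ v _ _ _ hv sv) => // y _.
        exact: hpos.
      exact: hneg.
    have := corC _ _ d 1 (or_introl erefl) an nz no; rewrite mul1r => h; exact: ltW.
  rewrite big1_seq // => y /andP [_ yS].
  have -> : comb sigma tau la mu y = 0.
    by case: (altP (comb sigma tau la mu y =P 0)) => // h; exfalso; apply: nz; exists y.
  by rewrite mul0r.
Qed.
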